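(* For every pair of positive integers $g,k$, there is a graph $G_{g,k}$ with girth at least $g$ and chromatic number at least $k$ that has a proper edge-colouring in which each cycle contains no colour exactly once.
   Context: A proper edge-colouring assigns colours to edges so that edges sharing a vertex receive distinct colours. ''Each cycle contains no colour exactly once'' means: for every cycle $C$ of the graph and every colour $c$, the number of edges of $C$ with colour $c$ is not equal to $1$. Graphs are finite and simple. *)

(* Defs.v *)
From mathcomp Require Import all_boot.
Set Implicit Arguments. Unset Strict Implicit. Unset Printing Implicit Defensive.

Definition simple_graph (T : finType) (e : rel T) : Prop :=
  symmetric e /\ irreflexive e.

Definition is_graph_cycle (T : finType) (e : rel T) (p : seq T) : Prop :=
  [/\ 3 <= size p, uniq p & cycle e p].

Definition girth_ge (T : finType) (e : rel T) (g : nat) : Prop :=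
  forall p : seq T, is_graph_cycle e p -> g <= size p.

Definition proper_vcolouring (T : finType) (e : rel T) (m : nat) (f : T -> 'I_m) : Prop :=
  forall x y, e x y -> f x != f y.

Definition chromatic_ge (T : finType) (e : rel T) (k : nat) : Prop :=
  forall m (f : T -> 'I_m), proper_vcolouring e f -> k <= m.

Definition proper_ecolouring (T : finType) (e : rel T) (c : T -> T -> nat) : Prop :=
  (forall x y, e x y -> c x y = c y x) /\
  (forall x y z, e x y -> e x z -> y != z -> c x y != c x z).

Definition cycle_colour_count (T : finType) (c : T -> T -> nat) (p : seq T) (col : nat) : nat :=
  count (fun x => c x (next p x) == col) p.

Definition no_unique_colour_on_cycles (T : finType) (e : rel T) (c : T -> T -> nat) : Prop :=
  forall p : seq T, is_graph_cycle e p -> forall col : nat, cycle_colour_count c p col != 1.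

(* Main.v *)
Require Import Defs.
From mathcomp Require Import all_boot.
From mathcomp Require Import zify.
Set Implicit Arguments. Unset Strict Implicit. Unset Printing Implicit Defensive.

Lemma card_ffun_constr (aT rT : finType) (K : {pred aT}) (P : {pred rT}) :
  #|[set f : {ffun aT -> rT} | [forall a, (a \in K) ==> P (f a)]]|
   = #|P| ^ #|K| * #|rT| ^ (#|aT| - #|K|).
Proof.
pose F a := if a \in K then (P : pred rT) else predT.
have -> : #|[set f : {ffun aT -> rT} | [forall a, (a \in K) ==> P (f a)]]|
    = #|(family F : simpl_pred {ffun aT -> rT})|.
  apply: eq_card => f; rewrite inE; apply/forallP/familyP => H a.
    by have := H a; rewrite /F; case: (a \in K).
  by have := H a; rewrite /F; case: (a \in K).
rewrite card_family.
have -> : foldr muln 1 [seq #|F x| | x : aT] = \prod_(x : aT) #|F x|.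
  have E s : foldr muln 1 [seq #|F x| | x <- s] = \prod_(x <- s) #|F x|.
    by elim: s => [|x s IH]; rewrite ?big_nil ?big_cons //= IH.
  by rewrite /image_mem E big_enum.
rewrite (bigID (fun x => x \in K)) /=.
rewrite (eq_bigr (fun _ => #|P|)); last by move=> i Hi; rewrite /F Hi; apply: eq_card => y.
rewrite [X in _ * X](eq_bigr (fun _ => #|rT|)); last first.
  by move=> i /negbTE Hi; rewrite /F Hi; apply: eq_card => y.
rewrite !prod_nat_const; congr (_ * _ ^ _).
rewrite -(cardC K) addKn; by apply: eq_card => x; rewrite !inE.
Qed.
Definition ltX (T : finType) (x y : T) := (enum_rank x < enum_rank y)%N.
Definition key (T : finType) (x y : T) : T * T := if ltX x y then (x, y) else (y, x).

Lemma ltX_total (T : finType) (x y : T) : x != y -> ltX x y || ltX y x.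
Proof.
move=> nxy; rewrite /ltX; case: (ltngtP (enum_rank x) (enum_rank y)) => //.
by move/val_inj/enum_rank_inj => E; rewrite E eqxx in nxy.
Qed.

Lemma ltX_asym (T : finType) (x y : T) : ltX x y -> ~~ ltX y x.
Proof. by rewrite /ltX => H; rewrite -leqNgt ltnW. Qed.

Lemma key_inj (T : finType) (x y x' y' : T) : x != y -> x' != y' ->
  key x y = key x' y' -> (x = x' /\ y = y') \/ (x = y' /\ y = x').
Proof.
move=> nxy nxy'; rewrite /key.
case: ifP => H1; case: ifP => H2 [-> ->]; by [left | right].
Qed.

Lemma next_next_neq (T : eqType) (p : seq T) x :
  uniq p -> 3 <= size p -> x \in p -> next p (next p x) != x.
Proof.
move=> Up Sp xp.
case: (rot_to xp) => i s Hrot.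
rewrite -!(next_rot i Up).
have Ur : uniq (rot i p) by rewrite rot_uniq.
have Sr : size (rot i p) = size p by rewrite size_rot.
rewrite Hrot in Ur Sr *; clear Hrot.
case: s Ur Sr => [|y [|z s]] //=; first by move=> _ E; rewrite -E in Sp.
  by move=> _ E; rewrite -E in Sp.
rewrite !inE !negb_or => /and3P[/and3P[nxy nxz _] /andP[nyz _] _] _.
rewrite eqxx /= (eq_sym y x) (negbTE nxy) eqxx.
by rewrite eq_sym.
Qed.

Definition keysC (T : finType) (p : seq T) := [seq key x (next p x) | x <- p].

Lemma next_neq (T : eqType) (p : seq T) x :
  uniq p -> 3 <= size p -> x \in p -> next p x != x.
Proof.
move=> Up Sp xp; apply/eqP => E.
by have := next_next_neq Up Sp xp; rewrite !E eqxx.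
Qed.

Lemma keysC_uniq (T : finType) (p : seq T) : uniq p -> 3 <= size p -> uniq (keysC p).
Proof.
move=> Up Sp; rewrite /keysC map_inj_in_uniq // => x x' xp x'p E.
have n1 : x != next p x by rewrite eq_sym next_neq.
have n2 : x' != next p x' by rewrite eq_sym next_neq.
have [[]//|[E1 E2]] := key_inj n1 n2 E.
by have := next_next_neq Up Sp x'p; rewrite -E1 E2 eqxx.
Qed.

Lemma size_keysC (T : finType) (p : seq T) : size (keysC p) = size p.
Proof. by rewrite size_map. Qed.

Lemma walk_changes (T U : eqType) (h : T -> U) y s :
  (count id (pairmap (fun a b => h a != h b) y s) == 0 -> h y = h (last y s)) /\
  (count id (pairmap (fun a b => h a != h b) y s) == 1 -> h y != h (last y s)).
Proof.
elim: s y => [|z s IH] y /=; first by split.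
have [IH0 IH1] := IH z.
case: (eqVneq (h y) (h z)) => Hyz /=.
  rewrite add0n Hyz; split; [exact: IH0 | exact: IH1].
rewrite add1n; split => // /eqP [] /eqP /IH0 <-; by [].
Qed.

Lemma pairmap_path (T U : eqType) (F : T -> T -> U) (f : T -> T) z l :
  path (fun a b => f a == b) z l -> pairmap F z l = map (fun x => F x (f x)) (belast z l).
Proof. by elim: l z => [|w l IH] z //= /andP[/eqP <- /IH ->]. Qed.

Lemma cycle_changes (T U : eqType) (h : T -> U) (p : seq T) :
  uniq p -> count (fun x => h x != h (next p x)) p != 1.
Proof.
case: p => [|y s] // Up.
have -> : count (fun x => h x != h (next (y :: s) x)) (y :: s)
        = count id (pairmap (fun a b => h a != h b) y (rcons s y)).
  have cn := cycle_next Up.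
  rewrite /= in cn.
  rewrite (pairmap_path _ cn) belast_rcons count_map.
  by apply: eq_count.
apply/negP => /eqP H.
have [_ H1] := walk_changes h y (rcons s y).
by have := H1 (introT eqP H); rewrite last_rcons eqxx.
Qed.
Notation HX m n := {ffun 'I_m -> 'I_n}.

Definition hadj m n (x y : HX m n) :=
  [exists i, (x i != y i) && [forall j, (x j != y j) ==> (j == i)]].
Definition upd m n (x : HX m n) (ca : 'I_m * 'I_n) : HX m n :=
  [ffun j => if j == ca.1 then ca.2 else x j].
Definition dir m n (x y : HX m n) : nat :=
  if [pick i | x i != y i] is Some i then val i else m.

Lemma hadj_sym m n (x y : HX m n) : hadj x y = hadj y x.
Proof.
apply/existsP/existsP => [] [i /andP[H1 /forallP H2]]; exists i;
  rewrite eq_sym H1 /=; apply/forallP => j; rewrite eq_sym; exact: H2.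
Qed.

Lemma hadj_irr m n (x : HX m n) : hadj x x = false.
Proof. by apply/negbTE/existsP => -[i]; rewrite eqxx. Qed.

Lemma hadjP m n (x y : HX m n) : hadj x y ->
  exists c, [/\ x c != y c, y = upd x (c, y c) & forall j, x j != y j -> j = c].
Proof.
move=> /existsP[c /andP[H1 /forallP H2]]; exists c; split => //.
  apply/ffunP => j; rewrite ffunE /=; case: eqP => [-> //|/eqP njc].
  by apply/eqP; apply: contraR njc => H; rewrite eq_sym in H; have := H2 j; rewrite H /=.
by move=> j H; have := H2 j; rewrite H => /eqP.
Qed.

Lemma dir_sym m n (x y : HX m n) : dir x y = dir y x.
Proof.
rewrite /dir (eq_pick (Q := fun i => y i != x i)) //.
by move=> i /=; rewrite eq_sym.
Qed.

Lemma dirE m n (x y : HX m n) (i : 'I_m) : hadj x y -> (dir x y == i) = (x i != y i).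
Proof.
move=> /hadjP [c [H1 _ H3]].
rewrite /dir; case: pickP => [j /= Hj|H]; last by have := H c; rewrite /= H1.
rewrite (H3 j Hj).
case: (eqVneq i c) => [->|nic]; first by rewrite eqxx H1.
have : x i == y i by apply: contraR nic => /H3 ->.
move=> ->; rewrite /=; apply/negP => /eqP /val_inj E; by rewrite E eqxx in nic.
Qed.

Lemma dir_lt m n (x y : HX m n) : hadj x y -> dir x y < m.
Proof.
move=> /hadjP [c [H1 _ _]]; rewrite /dir; case: pickP => [j _|H]; first exact: ltn_ord.
by have := H c; rewrite /= H1.
Qed.

Definition wseq m n L (w : HX m n * L.-tuple ('I_m * 'I_n)) : seq (HX m n) :=
  w.1 :: scanl (@upd m n) w.1 w.2.

Lemma size_wseq m n L (w : HX m n * L.-tuple ('I_m * 'I_n)) : size (wseq w) = L.+1.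
Proof. by rewrite /wseq /= size_scanl size_tuple. Qed.

Lemma path_scanl m n (x : HX m n) s : path (@hadj m n) x s ->
  exists st, scanl (@upd m n) x st = s.
Proof.
elim: s x => [|y s IH] x /=; first by exists [::].
case/andP => /hadjP [c [_ Hy _]] /IH [st Hst].
by exists ((c, y c) :: st) => /=; rewrite -Hy Hst.
Qed.

Lemma wseq_exists m n (x : HX m n) s : path (@hadj m n) x s ->
  exists w : HX m n * (size s).-tuple ('I_m * 'I_n), wseq w = x :: s.
Proof.
move=> /path_scanl [st Hst].
have Hs : size st == size s by rewrite -Hst size_scanl.
by exists (x, Tuple Hs); rewrite /wseq /= Hst.
Qed.
Lemma card_pins (A : finType) Q (ks : seq A) : uniq ks ->
  #|[set r : {ffun A -> 'I_Q.+1} | all (fun a => r a == ord0) ks]| = Q.+1 ^ (#|A| - size ks).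
Proof.
move=> Uks.
have -> : #|[set r : {ffun A -> 'I_Q.+1} | all (fun a => r a == ord0) ks]|
  = #|[set r : {ffun A -> 'I_Q.+1} | [forall a, (a \in ks) ==> (pred1 ord0) (r a)]]|.
  apply: eq_card => r; rewrite !inE; apply/allP/forallP => H a.
    by apply/implyP => /H.
  by move=> /(implyP (H a)).
rewrite card_ffun_constr card1 exp1n mul1n card_ord.
by rewrite (card_uniqP Uks).
Qed.

Lemma card_sum (T : finType) (P : pred T) : #|[set x | P x]| = \sum_(x : T) (P x : nat).
Proof.
rewrite -sum1_card big_mkcond /=; apply: eq_bigr => x _; by rewrite inE; case: (P x).
Qed.

Lemma sum_card_exchange (R W : finType) (P : R -> W -> bool) :
 \sum_(r : R) #|[set w | P r w]| = \sum_(w : W) #|[set r | P r w]|.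
Proof.
under eq_bigr => r _ do rewrite card_sum.
rewrite exchange_big /=; apply: eq_bigr => w _; by rewrite card_sum.
Qed.

Definition Er m n Q (r : {ffun HX m n * HX m n -> 'I_Q.+1}) (x y : HX m n) :=
  hadj x y && (r (key x y) == ord0).

Definition presC m n Q (r : {ffun HX m n * HX m n -> 'I_Q.+1}) (p : seq (HX m n)) :=
  all (fun a => r a == ord0) (keysC p).

Definition SC m n Q (r : {ffun HX m n * HX m n -> 'I_Q.+1}) L :=
  [set w : HX m n * L.-tuple ('I_m * 'I_n) | uniq (wseq w) && presC r (wseq w)].

Lemma sum_SC m n Q L : 2 <= L ->
  \sum_(r : {ffun HX m n * HX m n -> 'I_Q.+1}) #|SC r L|
   <= n ^ m * (m * n) ^ L * Q.+1 ^ (#|{: HX m n * HX m n}| - L.+1).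
Proof.
move=> HL; rewrite sum_card_exchange.
apply: (@leq_trans (\sum_(w : HX m n * L.-tuple ('I_m * 'I_n))
           Q.+1 ^ (#|{: HX m n * HX m n}| - L.+1))); last first.
  by rewrite sum_nat_const card_prod card_ffun card_tuple card_prod !card_ord.
apply: leq_sum => w _.
case Uw : (uniq (wseq w)).
  rewrite -(size_wseq w) -(size_keysC (wseq w)) -card_pins; last first.
    by apply: keysC_uniq => //; rewrite size_wseq.
  by apply: subset_leq_card; apply/subsetP => r; rewrite !inE.
apply: (@leq_trans 0) => //; rewrite leqn0 cards_eq0; apply/eqP/setP => r; by rewrite !inE.
Qed.

Definition chy m n (w : HX m n * 'I_m * 'I_n * 'I_n) := upd w.1.1.1 (w.1.1.2, w.1.2).
Definition chz m n (w : HX m n * 'I_m * 'I_n * 'I_n) := upd w.1.1.1 (w.1.1.2, w.2).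
Definition validCh m n (w : HX m n * 'I_m * 'I_n * 'I_n) :=
  [&& w.1.2 != w.2, w.1.2 != w.1.1.1 w.1.1.2 & w.2 != w.1.1.1 w.1.1.2].
Definition presCh m n Q (r : {ffun HX m n * HX m n -> 'I_Q.+1}) (w : HX m n * 'I_m * 'I_n * 'I_n) :=
  all (fun a => r a == ord0) [:: key w.1.1.1 (chy w); key w.1.1.1 (chz w)].
Definition SCh m n Q (r : {ffun HX m n * HX m n -> 'I_Q.+1}) :=
  [set w | validCh w && presCh r w].

Lemma upd_neq m n (x : HX m n) c a : a != x c -> x != upd x (c, a).
Proof.
move=> H; apply/eqP => /ffunP /(_ c); rewrite ffunE eqxx => E.
by rewrite E eqxx in H.
Qed.

Lemma valid_keys m n (w : HX m n * 'I_m * 'I_n * 'I_n) : validCh w ->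
  uniq [:: key w.1.1.1 (chy w); key w.1.1.1 (chz w)].
Proof.
case: w => [[[x c] a] b] /and3P /= [nab nax nbx].
rewrite andbT inE; apply/eqP => E.
have [[_ E2]|[E1 _]] := key_inj (upd_neq nax) (upd_neq nbx) E.
  move/ffunP: E2 => /(_ c); rewrite /chy /chz /= !ffunE eqxx /= => E3.
  by rewrite E3 eqxx in nab.
by have := upd_neq nbx; rewrite -E1 /chz /= eqxx.
Qed.

Lemma sum_SCh m n Q :
  \sum_(r : {ffun HX m n * HX m n -> 'I_Q.+1}) #|SCh r|
   <= n ^ m * m * n * n * Q.+1 ^ (#|{: HX m n * HX m n}| - 2).
Proof.
rewrite sum_card_exchange.
apply: (@leq_trans (\sum_(w : HX m n * 'I_m * 'I_n * 'I_n)
           Q.+1 ^ (#|{: HX m n * HX m n}| - 2))); last first.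
  by rewrite sum_nat_const !card_prod card_ffun !card_ord.
apply: leq_sum => w _.
case Vw : (validCh w).
  rewrite -[2]/(size [:: key w.1.1.1 (chy w); key w.1.1.1 (chz w)]) -card_pins; last first.
    exact: valid_keys.
  by apply: subset_leq_card; apply/subsetP => r; rewrite !inE.
apply: (@leq_trans 0) => //; rewrite leqn0 cards_eq0; apply/eqP/setP => r; by rewrite !inE.
Qed.
Definition sameline m n (c : 'I_m) (x y : HX m n) := [forall j, (j != c) ==> (x j == y j)].

Definition nonlonely m n (S : {set HX m n}) (c : 'I_m) (x : HX m n) :=
  [exists y in S, (y != x) && sameline c x y].

Lemma lonely_bound m q (S : {set HX m q.+1}) (c : 'I_m) :
  #|[set x in S | ~~ nonlonely S c x]| <= q.+1 ^ (m - 1).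
Proof.
have H1 : #|[set z : HX m q.+1 | [forall a, (a \in pred1 c) ==> (pred1 ord0) (z a)]]| = q.+1 ^ (m - 1).
  by rewrite card_ffun_constr !card1 exp1n mul1n !card_ord.
rewrite -H1 -(@card_in_imset _ _ (fun x => upd x (c, ord0)) [set x in S | ~~ nonlonely S c x]).
  apply: subset_leq_card; apply/subsetP => z; case/imsetP => x _ ->; rewrite inE.
  by apply/forallP => a; apply/implyP => /eqP ->; rewrite ffunE eqxx.
move=> x y; rewrite !inE => /andP[xS /existsP nlx] /andP[yS _] E.
case: (eqVneq x y) => // nxy; exfalso; apply: nlx; exists y; rewrite yS eq_sym nxy /=.
apply/forallP => j; apply/implyP => njc.
move/ffunP: E => /(_ j); rewrite !ffunE /= (negbTE njc) => ->; by [].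
Qed.

Lemma card_pairs (A B : finType) (P : A -> B -> bool) :
  #|[set ab : A * B | P ab.1 ab.2]| = \sum_(b : B) #|[set a | P a b]|.
Proof.
rewrite card_sum -(pair_big xpredT xpredT (fun a b => (P a b : nat))) /= exchange_big /=.
by apply: eq_bigr => b _; rewrite card_sum.
Qed.

Lemma nonlonely_bound m q (S : {set HX m q.+1}) (c : 'I_m) :
  #|S| - q.+1 ^ (m - 1) <= #|[set x | (x \in S) && nonlonely S c x]|.
Proof.
rewrite leq_subLR.
apply: (leq_trans _ (leq_add (lonely_bound S c) (leqnn #|[set x | (x \in S) && nonlonely S c x]|))).
rewrite -cardsUI.
apply: (leq_trans _ (leq_addr _ _)); apply: subset_leq_card; apply/subsetP => x xS.
by rewrite !inE xS /=; case: (nonlonely S c x).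
Qed.

Definition OP m n (S : {set HX m n}) :=
  [set a : HX m n * HX m n | [&& a.1 \in S, a.2 \in S & hadj a.1 a.2]].
Definition KS m n (S : {set HX m n}) :=
  [set a : HX m n * HX m n | [&& a.1 \in S, a.2 \in S, hadj a.1 a.2 & ltX a.1 a.2]].

Lemma OP_KS m n (S : {set HX m n}) : #|OP S| <= 2 * #|KS S|.
Proof.
apply: (@leq_trans #|KS S :|: [set (a.2, a.1) | a in KS S]|).
  apply: subset_leq_card; apply/subsetP => -[x y]; rewrite !inE /= => /and3P[xS yS hxy].
  have nxy : x != y by apply: contraTneq hxy => ->; rewrite hadj_irr.
  case/orP: (ltX_total nxy) => H; first by rewrite xS yS hxy H.
  apply/orP; right; apply/imsetP; exists (y, x) => //.
  by rewrite inE /= xS yS hadj_sym hxy H.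
apply: (leq_trans (leq_card_setU _ _)).
by rewrite mul2n -addnn leq_add2l leq_imset_card.
Qed.

Lemma sameline_hadj m n (c : 'I_m) (x y : HX m n) :
  y != x -> sameline c x y -> hadj x y /\ x c != y c.
Proof.
move=> nyx /forallP sl.
have xcy : x c != y c.
  apply: contra nyx => /eqP E; apply/eqP/ffunP => j.
  case: (eqVneq j c) => [->|njc]; first by rewrite E.
  by have := sl j; rewrite njc => /eqP ->.
split => //; apply/existsP; exists c; rewrite xcy /=.
apply/forallP => j; apply/implyP => H; apply: contraR H => njc.
by have := sl j; rewrite njc.
Qed.

Lemma NL_OP m n (S : {set HX m n}) :
  #|[set xc : HX m n * 'I_m | (xc.1 \in S) && nonlonely S xc.2 xc.1]| <= #|OP S|.
Proof.
pose nb (xc : HX m n * 'I_m) := odflt xc.1 [pick y in S | (y != xc.1) && sameline xc.2 xc.1 y].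
have nbP xc : (xc.1 \in S) && nonlonely S xc.2 xc.1 ->
   [/\ nb xc \in S, nb xc != xc.1 & sameline xc.2 xc.1 (nb xc)].
  case/andP => _ /existsP [y /and3P [yS nyx sl]].
  rewrite /nb; case: pickP => [z /and3P [zS nzx slz] | H] /=; first by [].
  by have := H y; rewrite yS nyx sl.
rewrite -(@card_in_imset _ _ (fun xc => (xc.1, nb xc))).
  apply: subset_leq_card; apply/subsetP => a; case/imsetP => xc; rewrite inE => Hxc ->.
  have [H1 H2 H3] := nbP xc Hxc.
  have [hxy _] := sameline_hadj H2 H3.
  by rewrite inE /= H1 hxy; case/andP: Hxc => ->.
move=> [x c] [x' c']; rewrite !inE /= => H H' [E1 E2].
subst x'.
have [_ H2 H3] := nbP (x, c) H; have [_ H2' H3'] := nbP (x, c') H'.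
rewrite /= in H2 H3 H2' H3'.
rewrite -E2 in H3'.
have [_ xcy] := sameline_hadj H2 H3.
case: (eqVneq c c') => [-> //|ncc].
move/forallP: H3' => /(_ c); rewrite ncc /= => E.
by rewrite E in xcy.
Qed.

Lemma KS_bound m q (S : {set HX m q.+1}) :
  2 * q.+1 ^ (m - 1) <= #|S| -> m * q.+1 ^ (m - 1) <= 2 * #|KS S|.
Proof.
move=> HS.
apply: (leq_trans _ (OP_KS S)); apply: (leq_trans _ (NL_OP S)).
rewrite (card_pairs (fun x c => (x \in S) && nonlonely S c x)).
apply: (@leq_trans (\sum_(c : 'I_m) (#|S| - q.+1 ^ (m - 1)))).
  rewrite sum_nat_const card_ord leq_mul2l; apply/orP; right.
  by rewrite leq_subRL ?addnn -?mul2n // (leq_trans _ HS) // leq_pmull.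
by apply: leq_sum => c _; apply: nonlonely_bound.
Qed.
Lemma union_bound (A B : finType) (P : A -> B -> bool) :
  #|[set b | [exists a, P a b]]| <= \sum_(a : A) #|[set b | P a b]|.
Proof.
rewrite card_sum.
under [X in _ <= X]eq_bigr => a _ do rewrite card_sum.
rewrite exchange_big /=; apply: leq_sum => b _.
case: existsP => [[a Hab]|] //=.
by rewrite (bigD1 a) //= Hab.
Qed.

Definition indep m n Q (r : {ffun HX m n * HX m n -> 'I_Q.+1}) (S : {set HX m n}) :=
  [forall x in S, forall y in S, ~~ Er r x y].

Lemma card_indep m n Q (S : {set HX m n}) :
  #|[set r : {ffun HX m n * HX m n -> 'I_Q.+1} | indep r S]|
    <= Q ^ #|KS S| * Q.+1 ^ (#|{: HX m n * HX m n}| - #|KS S|).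
Proof.
have HQ : #|[pred v : 'I_Q.+1 | v != ord0]| = Q by rewrite cardC1 card_ord.
have E := card_ffun_constr (mem (KS S)) [pred v : 'I_Q.+1 | v != ord0].
rewrite HQ card_ord in E; rewrite -E.
apply: subset_leq_card; apply/subsetP => r; rewrite !inE => /forallP Hr.
apply/forallP => -[x y]; apply/implyP => Hxy.
move: (Hxy : (x, y) \in KS S); rewrite /KS in_set /= => /and4P[xS yS hxy lxy].
have := Hr x; rewrite xS /= => /forallP /(_ y); rewrite yS /= /Er hxy /= /key lxy.
by [].
Qed.

Lemma bern a n : a ^ n * (a + n) <= (a.+1) ^ n * a.
Proof.
elim: n => [|n IH]; first by rewrite !expn0 addn0.
rewrite !expnS.
have H2 := leq_mul IH (leqnn a.+1).
apply: (@leq_trans (a ^ n * (a + n) * a.+1)).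
  move: (a ^ n) => b; nia.
apply: (leq_trans H2); nia.
Qed.

Lemma bern2 Q : 0 < Q -> 2 * Q ^ Q <= Q.+1 ^ Q.
Proof.
move=> HQ; have := bern Q Q.
move: (Q ^ Q) (Q.+1 ^ Q) => b c H.
rewrite -(leq_pmul2r HQ); nia.
Qed.

Lemma expn_mono a b e : a <= b -> a ^ e <= b ^ e.
Proof. by move=> H; elim: e => // e IH; rewrite !expnS leq_mul. Qed.

Lemma indep_num Q N E0 A : 0 < Q -> Q * N.+1 <= E0 -> E0 <= A ->
  2 ^ N.+1 * (Q ^ E0 * Q.+1 ^ (A - E0)) <= Q.+1 ^ A.
Proof.
move=> HQ H1 H2.
apply: (@leq_trans (Q.+1 ^ E0 * Q.+1 ^ (A - E0))); last by rewrite -expnD subnKC.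
rewrite mulnA leq_mul2r; apply/orP; right.
rewrite -(subnKC H1) !expnD mulnA; apply: leq_mul; last first.
  by apply: expn_mono.
rewrite mulnC expnM -expnMn expnM.
apply: expn_mono.
by rewrite mulnC bern2.
Qed.
Lemma card_setT_all (T : finType) : #|{: {set T}}| = 2 ^ #|T|.
Proof.
rewrite -cardsT -card_powerset; apply: eq_card => A.
by rewrite powersetE subsetT inE.
Qed.

Definition Bad m n Q g (r : {ffun HX m n * HX m n -> 'I_Q.+1}) :=
  \sum_(L < g | 2 <= L) #|SC r L| + #|SCh r|.

Lemma sum_Bad m n Q g : 0 < m -> 0 < n -> m * n = 4 * n ^ 2 * Q.+1 ->
  g.+1 < #|{: HX m n * HX m n}| ->
  \sum_(r : {ffun HX m n * HX m n -> 'I_Q.+1}) Bad g r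
   <= n ^ m * (\sum_(L < g) (4 * n ^ 2) ^ L + 4 * n ^ 3) * Q.+1 ^ (#|{: HX m n * HX m n}| - 1).
Proof.
move=> Hm Hn Hmn Hg.
set A := #|{: HX m n * HX m n}|.
rewrite /Bad big_split /= exchange_big /=.
rewrite mulnDr mulnDl; apply: leq_add.
  rewrite big_distrr big_distrl /= [X in _ <= X](bigID (fun L : 'I_g => 2 <= L)) /=.
  apply: leq_trans (leq_addr _ _).
  apply: leq_sum => L HL.
  apply: (leq_trans (sum_SC _ _ _ HL)).
  have HLA : L.+1 <= A by move: Hg (ltn_ord L); rewrite /A; lia.
  rewrite Hmn expnMn -!mulnA; do 2 apply: leq_mul => //; rewrite -expnD.
  apply: leq_pexp2l => //.
  move: HLA; rewrite /A; lia.
apply: (leq_trans (sum_SCh _ _ _)).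
have HA : 2 <= A by move: Hg; rewrite /A; lia.
have Hw : Q.+1 ^ (A - 1) = Q.+1 * Q.+1 ^ (A - 2).
  by rewrite -expnS; congr (_ ^ _); move: HA; lia.
rewrite /A in Hw; rewrite Hw -!mulnA leq_mul2l; apply/orP; right.
move: (Q.+1 ^ _) => z.
have -> : m * (n * (n * z)) = (m * n) * n * z by rewrite !mulnA.
rewrite Hmn.
have -> : 4 * n ^ 2 * Q.+1 * n * z = 4 * n ^ 3 * (Q.+1 * z).
  rewrite !expnS expn0; lia.
by rewrite !expnS expn0 !mulnA muln1.
Qed.

Lemma mono_QV Q E0 K A : E0 <= K -> K <= A ->
  Q ^ K * Q.+1 ^ (A - K) <= Q ^ E0 * Q.+1 ^ (A - E0).
Proof.
move=> H1 H2.
have -> : A - E0 = (K - E0) + (A - K) by lia.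
rewrite -(subnKC H1) expnD -mulnA leq_mul2l; apply/orP; right.
rewrite expnD leq_mul2r; apply/orP; right.
have -> : E0 + (K - E0) - E0 = K - E0 by lia.
by apply: expn_mono.
Qed.

Lemma good_exists m q Q g t E0 :
  0 < m -> 0 < Q -> m * q.+1 = 4 * q.+1 ^ 2 * Q.+1 ->
  g.+1 < #|{: HX m q.+1 * HX m q.+1}| ->
  8 * (\sum_(L < g) (4 * q.+1 ^ 2) ^ L + 4 * q.+1 ^ 3) <= Q ->
  Q * (q.+1 ^ m).+1 <= E0 -> E0 <= #|{: HX m q.+1 * HX m q.+1}| ->
  (forall S : {set HX m q.+1}, t <= #|S| -> E0 <= #|KS S|) ->
  exists r : {ffun HX m q.+1 * HX m q.+1 -> 'I_Q.+1},
    ~~ (q.+1 ^ m <= 2 * Bad g r) && ~~ [exists S : {set HX m q.+1}, (t <= #|S|) && indep r S].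
Proof.
move=> Hm HQ Hmn Hg HC HE0 HE0A HK.
set n := q.+1 in Hmn Hg HC HE0 HE0A HK *.
set A := #|{: HX m n * HX m n}| in Hg HE0A *.
set N := n ^ m in HE0 *.
set C := \sum_(L < g) (4 * n ^ 2) ^ L + 4 * n ^ 3 in HC.
have HN : 0 < N by rewrite expn_gt0.
set B1 := [set r : {ffun HX m n * HX m n -> 'I_Q.+1} | N <= 2 * Bad g r].
set B2 := [set r : {ffun HX m n * HX m n -> 'I_Q.+1} |
             [exists S : {set HX m n}, (t <= #|S|) && indep r S]].
have H1 : 4 * #|B1| <= Q.+1 ^ A.
  have Hs := sum_Bad (n := n) (Q := Q) Hm (ltn0Sn q) Hmn Hg.
  have H1a : N * #|B1| <= 2 * (N * C * Q.+1 ^ (A - 1)).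
    apply: (@leq_trans (\sum_r 2 * Bad g r)); last by rewrite -big_distrr leq_mul2l; apply/orP; right; exact: Hs.
    rewrite [X in _ <= X](bigID (fun r => r \in B1)) /=.
    apply: leq_trans (leq_addr _ _).
    rewrite -sum1_card big_distrr /=; apply: leq_sum => r; rewrite inE muln1 => H.
    by [].
  have H1b : #|B1| <= 2 * C * Q.+1 ^ (A - 1).
    by rewrite -(leq_pmul2l HN); apply: leq_trans H1a _; rewrite !mulnA [2 * N]mulnC.
  apply: (leq_trans (leq_mul (leqnn 4) H1b)).
  rewrite mulnA mulnA -[4 * 2]/8.
  apply: (@leq_trans (Q * Q.+1 ^ (A - 1))); first by rewrite leq_mul2r HC orbT.
  apply: (@leq_trans (Q.+1 * Q.+1 ^ (A - 1))); first by rewrite leq_mul2r leqnSn orbT.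
  rewrite -expnS; apply: leq_pexp2l => //; move: Hg; rewrite /A; lia.
have H2 : 2 * #|B2| <= Q.+1 ^ A.
  apply: leq_trans (indep_num HQ HE0 HE0A).
  rewrite expnS -mulnA leq_mul2l; apply/orP; right.
  apply: (leq_trans (union_bound _)).
  have -> : N = #|HX m n| by rewrite card_ffun !card_ord.
  rewrite -card_setT_all -sum1_card big_distrl /=.
  apply: leq_sum => S _; rewrite mul1n.
  case: (leqP t #|S|) => HtS; last first.
    apply: (@leq_trans 0) => //; rewrite leqn0 cards_eq0; apply/eqP/setP => r.
    by rewrite !inE; case: leqP HtS => //; move=> _ ; rewrite ltnNge => /negbTE ->.
  apply: leq_trans (mono_QV _ (HK S HtS) (max_card _)).
  apply: leq_trans (card_indep Q S).
  by apply: subset_leq_card; apply/subsetP => r; rewrite !inE => /andP[].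
have H3' : #|B1| + #|B2| < Q.+1 ^ A.
  have HV : 0 < Q.+1 ^ A by rewrite expn_gt0.
  lia.
have H3 : #|B1 :|: B2| < #|{: {ffun HX m n * HX m n -> 'I_Q.+1}}|.
  rewrite card_ffun card_ord.
  exact: (leq_ltn_trans (leq_card_setU _ _) H3').
have : 0 < #|~: (B1 :|: B2)| by move: H3; rewrite -(cardsC (B1 :|: B2)); lia.
case/card_gt0P => r; rewrite inE => Hr.
exists r; move: Hr; by rewrite !inE negb_or.
Qed.
Definition Dset m n Q g (r : {ffun HX m n * HX m n -> 'I_Q.+1}) : {set HX m n} :=
  [set x | [exists L : 'I_g, (2 <= L) && [exists w in SC r L, w.1 == x]]]
  :|: [set x | [exists w in SCh r, w.1.1.1 == x]].

Lemma card_Dset m n Q g (r : {ffun HX m n * HX m n -> 'I_Q.+1}) : #|Dset g r| <= Bad g r.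
Proof.
apply: (leq_trans (leq_card_setU _ _)); apply: leq_add.
  apply: (leq_trans (union_bound _)).
  rewrite [X in _ <= X]big_mkcond /=; apply: leq_sum => L _.
  case: (leqP 2 L) => HL /=.
    apply: (@leq_trans #|[set w.1 | w in SC r L]|); last exact: leq_imset_card.
    apply: subset_leq_card; apply/subsetP => x; rewrite inE => /existsP [w /andP[Hw /eqP <-]].
    by apply/imsetP; exists w.
  apply: (@leq_trans 0) => //; rewrite leqn0 cards_eq0; apply/eqP/setP => x.
  by rewrite !inE; case: leqP HL => //.
apply: (@leq_trans #|[set w.1.1.1 | w in SCh r]|); last exact: leq_imset_card.
apply: subset_leq_card; apply/subsetP => x; rewrite inE => /existsP [w /andP[Hw /eqP <-]].
by apply/imsetP; exists w.
Qed.

Lemma card_classes (T : finType) m' (f : T -> 'I_m') :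
  #|T| = \sum_(i : 'I_m') #|[set x | f x == i]|.
Proof.
under eq_bigr => i _ do rewrite card_sum.
rewrite exchange_big /= -sum1_card; apply: eq_bigr => x _.
by rewrite (bigD1 (f x)) //= eqxx big1 // => i /negbTE; rewrite eq_sym => ->.
Qed.

Lemma Er_sym m n Q (r : {ffun HX m n * HX m n -> 'I_Q.+1}) : symmetric (Er r).
Proof.
move=> x y; rewrite /Er hadj_sym.
case: (eqVneq x y) => [-> //|nxy].
case H: (hadj y x) => //=; congr (r _ == _).
rewrite /key; case: ifP => H1; case: ifP => H2 //.
  by have := ltX_asym H1; rewrite H2.
by have := ltX_total nxy; rewrite H1 H2.
Qed.

Lemma final_graph m q Q g k (r : {ffun HX m q.+1 * HX m q.+1 -> 'I_Q.+1}) :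
  0 < m -> q.+1 = 4 * k ->
  ~~ (q.+1 ^ m <= 2 * Bad g r) ->
  ~~ [exists S : {set HX m q.+1}, (2 * q.+1 ^ (m - 1) <= #|S|) && indep r S] ->
  exists (T : finType) (e : rel T),
    [/\ simple_graph e, girth_ge e g, chromatic_ge e k &
        exists c : T -> T -> nat, proper_ecolouring e c /\ no_unique_colour_on_cycles e c].
Proof.
move=> Hm Hqk Hb1 Hb2.
set D := Dset g r.
pose T := {x : HX m q.+1 | x \notin D}.
pose e : rel T := fun x y => Er r (val x) (val y).
have notD (x : T) : val x \in D -> False by move=> H; have := valP x; rewrite H.
exists T, e; split.
- split; first by move=> x y; exact: Er_sym.
  by move=> x; rewrite /e /Er hadj_irr.
- move=> p [Hs Hu Hc]; rewrite leqNgt; apply/negP => Hlt.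
  have Hc' : cycle (Er r) (map val p) by rewrite cycle_map.
  have Hu' : uniq (map val p) by rewrite map_inj_uniq //; exact: val_inj.
  case: p Hs Hu Hc Hc' Hu' Hlt => [|x0 s0] // Hs Hu Hc Hc' Hu' Hlt.
  rewrite /= in Hu'.
  have Hpath : path (@hadj _ _) (val x0) (map val s0).
    move: (Hc') => /=; rewrite rcons_path => /andP[H _]; apply: (sub_path _ H) => a b /andP[]; by [].
  have [w Hw] := wseq_exists Hpath.
  have HL : size (map val s0) < g by move: Hlt; rewrite size_map /=; lia.
  have HL2 : 2 <= size (map val s0) by move: Hs; rewrite size_map /=; lia.
  apply: (notD x0).
  rewrite inE; apply/orP; left; rewrite inE; apply/existsP; exists (Ordinal HL); rewrite /= HL2 /=.
  apply/existsP; exists w; rewrite inE Hw.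
  apply/andP; split; last by move: Hw; rewrite /wseq => -[-> _].
  apply/andP; split; first exact: Hu'.
  apply/allP => a /mapP [y yp ->].
  by have := next_cycle Hc' yp; rewrite /Er => /andP[_].
- move=> m' f Hf; rewrite leqNgt; apply/negP => Hlt.
  set P := q.+1 ^ (m - 1).
  have Hcl i : #|[set x | f x == i]| < 2 * P.
    rewrite ltnNge; apply/negP => Hge.
    move/negP: Hb2; apply; apply/existsP; exists [set val x | x in [set x | f x == i]].
    rewrite card_imset; last exact: val_inj.
    rewrite Hge /=.
    apply/forallP => a; apply/implyP => /imsetP [x Hx ->].
    apply/forallP => b; apply/implyP => /imsetP [y Hy ->].
    apply/negP => He; have := Hf x y He.
    by move: Hx Hy; rewrite !inE => /eqP -> /eqP ->; rewrite eqxx.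
  have HT : #|{: T}| <= m' * (2 * P).-1.
    rewrite (card_classes f); apply: (@leq_trans (\sum_(i : 'I_m') (2 * P).-1)).
      by apply: leq_sum => i _; rewrite -ltnS prednK ?Hcl // (leq_ltn_trans _ (Hcl i)).
    by rewrite sum_nat_const card_ord.
  have HTD : #|{: T}| + #|D| = q.+1 ^ m.
    rewrite card_sig addnC.
    have -> : #|[pred x | x \notin D]| = #|~: D| by apply: eq_card => x; rewrite !inE.
    by rewrite cardsC card_ffun !card_ord.
  have HD := card_Dset g r.
  have HN : q.+1 ^ m = 4 * k * P by rewrite -Hqk /P -expnS subn1 prednK.
  have HP : 0 < P by rewrite expn_gt0.
  have Hm' : m' <= k.-1 by lia.
  have H1 := leq_mul Hm' (leqnn (2 * P).-1).
  move: Hb1 HT HTD HD HN H1; move: (Bad g r) #|{: T}| #|D| (q.+1 ^ m) => b tT dD N.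
  rewrite -ltnNge; nia.
- exists (fun x y => dir (val x) (val y)); split.
    split; first by move=> x y _; exact: dir_sym.
    move=> x y z Hxy Hxz nyz; apply/negP => /eqP Hc.
    have hxy : hadj (val x) (val y) by case/andP: Hxy.
    have hxz : hadj (val x) (val z) by case/andP: Hxz.
    set i := Ordinal (dir_lt hxy).
    have Hi1 : val x i != val y i by rewrite -dirE.
    have Hi2 : val x i != val z i by rewrite -dirE // -Hc.
    have [c1 [_ Ey H1]] := hadjP hxy.
    have [c2 [_ Ez H2]] := hadjP hxz.
    have E1 := H1 i Hi1; have E2 := H2 i Hi2.
    rewrite -E1 in Ey; rewrite -E2 in Ez.
    apply: (notD x).
    rewrite inE; apply/orP; right; rewrite inE; apply/existsP.
    exists (val x, i, val y i, val z i); rewrite inE /= eqxx andbT.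
    apply/andP; split.
      rewrite /validCh /=; apply/and3P; split; last first.
          by rewrite eq_sym; exact: Hi2.
        by rewrite eq_sym; exact: Hi1.
      apply: contra nyz => /eqP E; apply/eqP/val_inj; by rewrite Ey Ez E.
    rewrite /presCh /chy /chz /= -Ey -Ez.
    by case/andP: Hxy => _ ->; case/andP: Hxz => _ ->.
  move=> p [Hs Hu Hc] col.
  have Hc' : cycle (Er r) (map val p) by rewrite cycle_map.
  have Hu' : uniq (map val p) by rewrite map_inj_uniq //; exact: val_inj.
  rewrite /cycle_colour_count.
  have -> : count (fun x => dir (val x) (val (next p x)) == col) p
          = count (fun a => dir a (next (map val p) a) == col) (map val p).
    rewrite count_map; apply: eq_count => x /=.
    by rewrite (next_map val_inj Hu).
  case: (ltnP col m) => Hcol.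
    set i := Ordinal Hcol.
    rewrite (@eq_in_count _ _ (fun a => (fun b : HX m q.+1 => b i) a != (fun b => b i) (next (map val p) a))).
      exact: cycle_changes.
    move=> a Ha /=; have := next_cycle Hc' Ha; rewrite /Er => /andP [Hh _].
    by rewrite -(dirE i Hh).
  rewrite (@eq_in_count _ _ pred0) ?count_pred0 //.
  move=> a Ha /=; have := next_cycle Hc' Ha; rewrite /Er => /andP [Hh _].
  apply/negbTE; rewrite neq_ltn; apply/orP; left; exact: (leq_trans (dir_lt Hh) Hcol).
Qed.

Theorem theorem1p1 (g k : nat) (hg : 0 < g) (hk : 0 < k) :
  exists (T : finType) (e : rel T),
    [/\ simple_graph e, girth_ge e g, chromatic_ge e k &
        exists c : T -> T -> nat, proper_ecolouring e c /\ no_unique_colour_on_cycles e c].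
Proof.
pose q := 4 * k.-1 + 3.
have Hqk : q.+1 = 4 * k by rewrite /q; lia.
pose C := \sum_(L < g) (4 * q.+1 ^ 2) ^ L + 4 * q.+1 ^ 3.
pose Q := 8 * C + g.
pose m := 4 * q.+1 * Q.+1.
pose N := q.+1 ^ m.
pose P := q.+1 ^ (m - 1).
have Hm : 0 < m by rewrite /m; lia.
have HQ : 0 < Q by rewrite /Q; lia.
have HNP : N = q.+1 * P by rewrite /N /P -expnS subn1 prednK.
have HmN : m < N by rewrite /N ltn_expl // Hqk; lia.
have HA : #|{: HX m q.+1 * HX m q.+1}| = N * N by rewrite card_prod card_ffun !card_ord.
have [r /andP [Hb1 Hb2]] := @good_exists m q Q g (2 * P) (2 * Q.+1 * N) Hm HQ
   (ltac:(rewrite /m; lia)) (ltac:(rewrite HA /m /Q in HmN *; nia))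
   (ltac:(rewrite /Q; lia)) (ltac:(lia)) (ltac:(rewrite HA /m in HmN *; nia))
   (fun S HS => ltac:(have := KS_bound HS; rewrite -/P /m HNP; nia)).
exact: (final_graph Hm Hqk Hb1 Hb2).
Qed.
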